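(* Let $R$ be an associative ring with identity, $M$ a left $R$-module and $n\ge0$ an integer. The following are equivalent: (1) $\operatorname{Gpd}_R(M)\le n$; (2) for every integer $t$ with $0\le t\le n$ there exists an exact sequence $0\to X_n\to\cdots\to X_1\to X_0\to M\to 0$ of left $R$-modules such that $X_t$ is Gorenstein projective and $X_i$ is projective for all $i\neq t$.
   Context: A left $R$-module $G$ is Gorenstein projective if there is an exact sequence $\cdots\to P_1\to P_0\to P^0\to P^1\to\cdots$ of projective left $R$-modules which remains exact after applying $\operatorname{Hom}_R(-,P)$ for every projective left $R$-module $P$, and such that $G\cong \operatorname{Im}(P_0\to P^0)$. $\operatorname{Gpd}_R(M)$ is the least $n\ge0$ such that there is an exact sequence $0\to G_n\to\cdots\to G_0\to M\to 0$ with all $G_i$ Gorenstein projective ($\infty$ if none exists). *)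

(* Defs.v *)
(* Left R-modules over a (possibly noncommutative) ring R with 1
   are modelled by [lmodType R]; module homomorphisms by [{linear A -> B}]. *)
From HB Require Import structures.
From mathcomp Require Import all_boot all_order all_algebra.
Set Implicit Arguments. Unset Strict Implicit. Unset Printing Implicit Defensive.
Import GRing.Theory.
Local Open Scope ring_scope.

Section Defs.
Variable R : pzRingType.

Definition exact_at (A B C : lmodType R) (f : A -> B) (g : B -> C) : Prop :=
  forall b : B, g b = 0 <-> exists a : A, f a = b.

Definition projective (P : lmodType R) : Prop :=
  forall (A B : lmodType R) (g : {linear A -> B}),
    (forall b : B, exists a : A, g a = b) ->
    forall f : {linear P -> B},
      exists h : {linear P -> A}, forall x : P, g (h x) = f x.

Definition totally_acyclic (P : int -> lmodType R)
    (d : forall i : int, {linear P i -> P (i + 1)}) : Prop :=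
  [/\ forall i : int, projective (P i),
      forall i : int, exact_at (d i) (d (i + 1)) &
      forall Q : lmodType R, projective Q ->
        forall (i : int) (phi : {linear P (i + 1) -> Q}),
          (forall x : P i, phi (d i x) = 0) ->
          exists psi : {linear P (i + 1 + 1) -> Q},
            forall y : P (i + 1), psi (d (i + 1) y) = phi y].

Definition gorenstein_projective (G : lmodType R) : Prop :=
  exists (P : int -> lmodType R) (d : forall i : int, {linear P i -> P (i + 1)}),
    totally_acyclic d /\
    exists h : {linear G -> P 1},
      injective h /\ forall y : P 1, (exists g : G, h g = y) <-> (exists x : P 0, d 0 x = y).

Definition exact_resolution (n : nat) (M : lmodType R) (X : nat -> lmodType R)
    (d : forall k : nat, {linear X k.+1 -> X k}) (e : {linear X 0%N -> M}) : Prop :=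
  [/\ forall k : nat, (n < k)%N -> forall x : X k, x = 0,
      forall m : M, exists x : X 0%N, e x = m,
      exact_at (d 0%N) e &
      forall k : nat, exact_at (d k.+1) (d k)].

Definition Gpd_le (M : lmodType R) (n : nat) : Prop :=
  exists (X : nat -> lmodType R) (d : forall k : nat, {linear X k.+1 -> X k})
         (e : {linear X 0%N -> M}),
    exact_resolution n d e /\ forall i : nat, (i <= n)%N -> gorenstein_projective (X i).

End Defs.

(* Main.v *)
Require Import Defs.
From HB Require Import structures.
From mathcomp Require Import all_boot all_order all_algebra.
From Stdlib Require Import ClassicalEpsilon.
Set Implicit Arguments. Unset Strict Implicit. Unset Printing Implicit Defensive.
Import GRing.Theory.
Local Open Scope ring_scope.

Definition mkL (R : pzRingType) (A B : lmodType R) (f : A -> B)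
  (H : forall a x y, f (a *: x + y) = a *: f x + f y) : {linear A -> B} :=
  HB.pack f (GRing.isLinear.Build R A B *:%R f H).
Arguments mkL {R A B} f H.

Section Ker.
Variables (R : pzRingType) (V W : lmodType R) (f : {linear V -> W}).
Definition kerT := {x : V | f x == 0}.
HB.instance Definition _ := Choice.copy kerT {x : V | f x == 0}.
Lemma ker0 : f 0 == 0. Proof. by rewrite linear0. Qed.
Lemma kerD (x y : kerT) : f (val x + val y) == 0.
Proof. by rewrite linearD (eqP (valP x)) (eqP (valP y)) addr0. Qed.
Lemma kerN (x : kerT) : f (- val x) == 0.
Proof. by rewrite linearN (eqP (valP x)) oppr0. Qed.
Lemma kerZ a (x : kerT) : f (a *: val x) == 0.
Proof. by rewrite linearZZ (eqP (valP x)) scaler0. Qed.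
Definition k0 : kerT := @exist V (fun z => f z == 0) 0 ker0.
Definition kadd (x y : kerT) : kerT := @exist V (fun z => f z == 0) _ (kerD x y).
Definition kopp (x : kerT) : kerT := @exist V (fun z => f z == 0) _ (kerN x).
Definition kscale a (x : kerT) : kerT := @exist V (fun z => f z == 0) _ (kerZ a x).
Lemma kaddA : associative kadd. Proof. by move=> x y z; apply: val_inj; rewrite /= addrA. Qed.
Lemma kaddC : commutative kadd. Proof. by move=> x y; apply: val_inj; rewrite /= addrC. Qed.
Lemma kadd0 : left_id k0 kadd. Proof. by move=> x; apply: val_inj; rewrite /= add0r. Qed.
Lemma kaddN : left_inverse k0 kopp kadd. Proof. by move=> x; apply: val_inj; rewrite /= addNr. Qed.
HB.instance Definition _ := GRing.isZmodule.Build kerT kaddA kaddC kadd0 kaddN.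
Lemma kscaleA a b (x : kerT) : kscale a (kscale b x) = kscale (a * b) x.
Proof. by apply: val_inj; rewrite /= scalerA. Qed.
Lemma kscale1 : left_id 1 kscale. Proof. by move=> x; apply: val_inj; rewrite /= scale1r. Qed.
Lemma kscaleDr : right_distributive kscale +%R.
Proof. by move=> a x y; apply: val_inj; rewrite /= scalerDr. Qed.
Lemma kscaleDl (v : kerT) : {morph kscale^~ v : a b / a + b}.
Proof. by move=> a b; apply: val_inj; rewrite /= scalerDl. Qed.
HB.instance Definition _ :=
  GRing.Zmodule_isLmodule.Build R kerT kscaleA kscale1 kscaleDr kscaleDl.
Definition kinc : {linear kerT -> V} := @mkL R kerT V (fun x : kerT => val x) (fun a x y => erefl).
Lemma kincE x : kinc x = val x. Proof. by []. Qed.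
Lemma kin (x : kerT) : f (val x) = 0. Proof. exact: eqP (valP x). Qed.
Definition kmk (x : V) (H : f x = 0) : kerT := @exist V (fun z => f z == 0) x (introT eqP H).
Lemma kmkE x H : val (@kmk x H) = x. Proof. by []. Qed.
End Ker.

Section Basics.
Variable R : pzRingType.

Lemma mkLE (A B : lmodType R) f H x : @mkL R A B f H x = f x.
Proof. by []. Qed.

Lemma exists_linear (A B : lmodType R) (Rel : A -> B -> Prop) :
  (forall a, exists b, Rel a b) -> (forall a b b', Rel a b -> Rel a b' -> b = b') ->
  (forall k a a' b b', Rel a b -> Rel a' b' -> Rel (k *: a + a') (k *: b + b')) ->
  exists f : {linear A -> B}, forall a, Rel a (f a).
Proof.
move=> Hex Hun Hlin.
pose g a := proj1_sig (constructive_indefinite_description _ (Hex a)).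
have Hg a : Rel a (g a) by rewrite /g; case: constructive_indefinite_description.
have Hl k x y : g (k *: x + y) = k *: g x + g y.
  by apply: (Hun (k *: x + y)); [apply: Hg | apply: Hlin; apply: Hg].
by exists (mkL _ Hl).
Qed.

Lemma add_eq0_l (V : zmodType) (a b : V) : a + b = 0 -> a = - b.
Proof. by move=> H; apply/eqP; rewrite -addr_eq0 H. Qed.
Lemma add_eq0_r (V : zmodType) (a b : V) : a + b = 0 -> b = - a.
Proof. by move=> H; apply/eqP; rewrite -addr_eq0 addrC H. Qed.

Definition idL (A : lmodType R) : {linear A -> A} := mkL (fun x : A => x) (fun _ _ _ => erefl).
Definition zeroL (A B : lmodType R) : {linear A -> B} :=
  mkL (fun _ : A => (0 : B)) (fun a _ _ => etrans (esym (addr0 0)) (congr1 (+%R^~ 0) (esym (scaler0 _ a)))).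
Definition compL (A B C : lmodType R) (g : {linear B -> C}) (f : {linear A -> B}) :
  {linear A -> C} := mkL (fun x => g (f x)) (fun a x y => etrans (congr1 g (linearP f a x y)) (linearP g _ _ _)).

Lemma proj_lift (P A B : lmodType R) (g : {linear A -> B}) (f : {linear P -> B}) :
  projective P -> (forall x, exists a, g a = f x) ->
  exists h : {linear P -> A}, forall x, g (h x) = f x.
Proof.
move=> PP Hs.
have HF k (z z' : (A * P)%type) :
   g (k *: z + z').1 - f (k *: z + z').2 = k *: (g z.1 - f z.2) + (g z'.1 - f z'.2).
  by rewrite /= (linearP g) (linearP f) opprD addrACA scalerBr.
pose F := mkL _ HF.
have Hs2 k (z z' : kerT F) :
   (val (k *: z + z')).2 = k *: (val z).2 + (val z').2 by [].
pose s := mkL _ Hs2.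
have [h0 Hh0] : exists h0 : {linear P -> kerT F}, forall x, s (h0 x) = idL P x.
  apply: PP => x; have [a Ha] := Hs x.
  have Hk : F (a, x) = 0 by rewrite mkLE /= Ha subrr.
  by exists (kmk Hk).
have Hh k (x y : P) : (val (h0 (k *: x + y))).1 = k *: (val (h0 x)).1 + (val (h0 y)).1.
  by rewrite linearP.
exists (mkL _ Hh) => x; rewrite mkLE.
have := kin (h0 x); rewrite mkLE /= => /eqP; rewrite subr_eq0 => /eqP ->.
by have := Hh0 x; rewrite mkLE => ->.
Qed.

Lemma proj_prod (A B : lmodType R) : projective A -> projective B -> projective (A * B)%type.
Proof.
move=> PA PB U V g Hg f.
have H1 k (x y : A) : f (k *: x + y, 0) = k *: f (x, 0) + f (y, 0).
  rewrite -linearP; congr (f _); apply: injective_projections => /=; by rewrite ?scaler0 ?addr0.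
have H2 k (x y : B) : f (0, k *: x + y) = k *: f (0, x) + f (0, y).
  rewrite -linearP; congr (f _); apply: injective_projections => /=; by rewrite ?scaler0 ?addr0.
have [hA HA] := PA U V g Hg (mkL _ H1).
have [hB HB] := PB U V g Hg (mkL _ H2).
have H3 k (z z' : (A * B)%type) : hA (k *: z + z').1 + hB (k *: z + z').2 =
   k *: (hA z.1 + hB z.2) + (hA z'.1 + hB z'.2).
  by rewrite /= !linearP scalerDr addrACA.
exists (mkL _ H3) => [[a b]]; rewrite !mkLE /= linearD HA HB !mkLE -linearD /=.
by congr (f _); apply: injective_projections => /=; rewrite ?addr0 ?add0r.
Qed.

End Basics.

Definition castS (S : int -> Type) (i j : int) (e : i = j) (x : S i) : S j :=
  eq_rect i S x j e.

Lemma castS_id (S : int -> Type) i (e : i = i) (x : S i) : castS e x = x.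
Proof. by rewrite (eq_irrelevance e erefl). Qed.

Lemma castS_comp (S : int -> Type) i j k (e : i = j) (e' : j = k) (x : S i) :
  castS e' (castS e x) = castS (etrans e e') x.
Proof. by case: k / e'; case: j / e. Qed.

Lemma castS_f (S : int -> Type) (f : forall j, S j) i j (e : i = j) : f j = castS e (f i).
Proof. by case: j / e. Qed.

Lemma NegzS1 (m : nat) : Negz m.+1 + 1 = Negz m.
Proof. by rewrite !NegzE -[m.+2]addn1 PoszD opprD addrNK. Qed.

Lemma oddS_int (i : int) : odd (absz (i + 1)) = ~~ odd (absz i).
Proof.
case: i => [n|[|m]] //=; first by rewrite addn1.
by rewrite /= subn1 negbK.
Qed.

Section IntRec.
Variables (S : int -> Type) (Link : forall j, S j -> S (j + 1) -> Prop).
Variables (s0 : S 0) (up : forall j, S j -> S (j + 1)) (down : forall j, S (j + 1) -> S j).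
Hypothesis Hup : forall j (x : S j), Link x (up x).
Hypothesis Hdown : forall j (y : S (j + 1)), Link (down y) y.

Lemma eP (m : nat) : Posz m + 1 = Posz m.+1.
Proof. by rewrite -addn1 PoszD. Qed.
Definition eN0 : (0 : int) = Negz 0 + 1 := erefl.
Definition eN (m : nat) : Negz m = Negz m.+1 + 1 := esym (NegzS1 m).

Fixpoint iu (m : nat) : S (Posz m) :=
  match m with 0 => s0 | m'.+1 => castS (eP m') (up (iu m')) end.
Fixpoint idn (m : nat) : S (Negz m) :=
  match m with 0 => down (castS eN0 s0) | m'.+1 => down (castS (eN m') (idn m')) end.
Definition sF (j : int) : S j := match j with Posz m => iu m | Negz m => idn m end.

Lemma int_rec_ex : exists s : forall j, S j, s 0 = s0 /\ forall j, Link (s j) (s (j + 1)).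
Proof.
exists sF; split => // [[m|[|m]]].
- rewrite (castS_f sF (esym (eP m))) /= castS_comp castS_id; exact: Hup.
- rewrite (castS_f sF (eN0)) /=; exact: Hdown.
- rewrite (castS_f sF (eN m)) /=; exact: Hdown.
Qed.
End IntRec.

Section GPbasics.
Variable R : pzRingType.

Definition castm (P : int -> lmodType R) i j (e : i = j) : {linear P i -> P j} :=
  castS (S := fun j => {linear P i -> P j}) e (idL (P i)).

Lemma castm_inj (P : int -> lmodType R) i j (e : i = j) : injective (castm P e).
Proof. by case: j / e. Qed.

Lemma img_cast (P : int -> lmodType R) k k' (e : k = k') (A B : Type) (u : A -> P k)
  (v : B -> P k) : (forall z, (exists a, u a = z) <-> (exists b, v b = z)) ->
  forall y, (exists a, castm P e (u a) = y) <-> (exists b, castm P e (v b) = y).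
Proof. by case: k' / e. Qed.

Section Shift.
Variables (P : int -> lmodType R) (d : forall i : int, {linear P i -> P (i + 1)}).

Lemma exT : (forall i, exact_at (d i) (d (i + 1))) ->
  forall j j' (e : j + 1 = j') (b : P j'), d j' b = 0 <-> exists a : P j, castm P e (d j a) = b.
Proof. move=> Hex j j' e; case: j' / e => b; exact: Hex. Qed.

Lemma homT : (forall Q : lmodType R, projective Q ->
        forall (i : int) (phi : {linear P (i + 1) -> Q}),
          (forall x : P i, phi (d i x) = 0) ->
          exists psi : {linear P (i + 1 + 1) -> Q},
            forall y : P (i + 1), psi (d (i + 1) y) = phi y) ->
  forall Q : lmodType R, projective Q ->
  forall j j' (e : j + 1 = j') j'' (e' : j' + 1 = j'') (phi : {linear P j' -> Q}),
  (forall x, phi (castm P e (d j x)) = 0) ->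
  exists psi : {linear P j'' -> Q}, forall y, psi (castm P e' (d j' y)) = phi y.
Proof. move=> H Q PQ j j' e; case: j' / e => j'' e'; case: j'' / e'; exact: H. Qed.

Lemma imgT j j' (e : j = j') k (e1 : j + 1 = k) (e2 : j' + 1 = k) y :
  (exists x : P j, castm P e1 (d j x) = y) <-> (exists x : P j', castm P e2 (d j' x) = y).
Proof. by case: j' / e e2 => e2; rewrite (eq_irrelevance e1 e2). Qed.

Lemma eS (s i : int) : i + s + 1 = i + 1 + s.
Proof. by rewrite addrAC. Qed.

Definition ds (s i : int) : {linear P (i + s) -> P (i + 1 + s)} :=
  compL (castm P (eS s i)) (d (i + s)).

Lemma shift_TA s : totally_acyclic d -> totally_acyclic (ds s).
Proof.
case=> Hp Hex Hhom; split.
- by move=> i; exact: Hp.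
- move=> i b; rewrite /ds mkLE; split.
  + move=> H0; have : d (i + 1 + s) b = 0.
      by apply: (castm_inj (e := eS s (i + 1))); rewrite H0 linear0.
    by move/(exT Hex (eS s i)) => [a Ha]; exists a; rewrite mkLE.
  + case=> a; rewrite mkLE => Ha.
    have : d (i + 1 + s) b = 0 by apply/(exT Hex (eS s i)); exists a.
    by move->; rewrite linear0.
- move=> Q PQ i phi Hphi.
  have [psi Hpsi] := homT Hhom PQ (e := eS s i) (eS s (i + 1)) Hphi.
  by exists psi => y; rewrite /ds mkLE.
Qed.

Lemma GP_at s (G : lmodType R) (h : {linear G -> P (s + 1)}) :
  totally_acyclic d -> injective h ->
  (forall y, (exists g, h g = y) <-> exists x : P s, d s x = y) ->
  gorenstein_projective G.
Proof.
move=> TA hi him.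
exists (fun i => P (i + s)), (ds s); split; first exact: shift_TA.
have e1 : s + 1 = 1 + s by rewrite addrC.
exists (compL (castm P e1) h); split.
  by move=> x y; rewrite !mkLE => /castm_inj /hi.
move=> y.
have -> : (exists x : P (0 + s), ds s 0 x = y) <->
          (exists x : P s, castm P e1 (d s x) = y).
  have e0 : s = 0 + s by rewrite add0r.
  by rewrite /ds; symmetry; apply: (imgT e0 e1 (eS s 0) y).
exact: (img_cast e1 him y).
Qed.
End Shift.

Lemma proj_GP (Q : lmodType R) : projective Q -> gorenstein_projective Q.
Proof.
move=> PQ.
pose d (i : int) : {linear Q -> Q} := if odd (absz i) then zeroL Q Q else idL Q.
have dE i x : d i x = if odd (absz i) then 0 else x by rewrite /d; case: ifP.
exists (fun _ => Q), d; split; last first.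
  exists (idL Q); split; first by move=> x y.
  move=> y; split=> -[x Hx]; exists x; by rewrite -Hx ?dE.
split => //.
- move=> i b; case Hi: (odd (absz i)).
  + have E1 a : d i a = 0 by rewrite dE Hi.
    have E2 : d (i + 1) b = b by rewrite dE oddS_int Hi.
    rewrite E2; split; first by move->; exists 0; exact: E1.
    by case=> a; rewrite E1.
  + have E1 a : d i a = a by rewrite dE Hi.
    have E2 : d (i + 1) b = 0 by rewrite dE oddS_int Hi.
    by rewrite E2; split => // _; exists b; rewrite E1.
- move=> Q' PQ' i phi Hphi.
  case Hi: (odd (absz i)).
  + exists phi => y; by rewrite dE oddS_int Hi.
  + exists (zeroL Q Q') => y; rewrite mkLE -(Hphi y) dE Hi; by [].
Qed.

Lemma GP_iso (G G' : lmodType R) (f : {linear G' -> G}) :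
  injective f -> (forall g, exists g', f g' = g) ->
  gorenstein_projective G -> gorenstein_projective G'.
Proof.
move=> fi fs [P [d [TA [h [hi him]]]]].
exists P, d; split => //; exists (compL h f); split.
  by move=> x y; rewrite !mkLE => /hi /fi.
move=> y; rewrite -him; split; case=> g.
  by rewrite mkLE => <-; exists (f g).
by case: (fs g) => g' <- <-; exists g'; rewrite mkLE.
Qed.

End GPbasics.

Section GPsyz.
Variable R : pzRingType.

Lemma kin_iff (V W : lmodType R) (f : {linear V -> W}) y :
  (exists g : kerT f, kinc f g = y) <-> f y = 0.
Proof. by split; [case=> g <-; exact: kin | move=> H; exists (kmk H)]. Qed.

Lemma GP_data (G : lmodType R) : gorenstein_projective G ->
  exists (P : int -> lmodType R) (d : forall i : int, {linear P i -> P (i + 1)})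
    (h : {linear G -> P 1}) (p : {linear P 0 -> G}),
  totally_acyclic d /\ injective h /\
  (forall y, (exists g, h g = y) <-> (exists x : P 0, d 0 x = y)) /\
  (forall x, h (p x) = d 0 x) /\ (forall g, exists x, p x = g).
Proof.
case=> P [d [TA [h [hi him]]]].
have [p Hp] : exists p : {linear P 0 -> G}, forall x, h (p x) = d 0 x.
  apply: (exists_linear (Rel := fun x g => h g = d 0 x)).
  - by move=> x; have [g Hg] := (him (d 0 x)).2 (ex_intro _ x erefl); exists g.
  - by move=> x b b' H1 H2; apply: hi; rewrite H1 H2.
  - by move=> k a a' b b' H1 H2; rewrite linearP H1 H2 linearP.
exists P, d, h, p; do 4! (split => //).
move=> g; have [x Hx] := (him (h g)).1 (ex_intro _ g erefl).
by exists x; apply: hi; rewrite Hp.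
Qed.

Lemma GP_cok (G : lmodType R) : gorenstein_projective G ->
  exists (Q G' : lmodType R) (i : {linear G -> Q}) (p : {linear Q -> G'}),
  [/\ projective Q, gorenstein_projective G', injective i,
      (forall g', exists q, p q = g') &
      (forall q, p q = 0 <-> exists g, i g = q) /\
      (forall (Q' : lmodType R) (f : {linear G -> Q'}), projective Q' ->
        exists f' : {linear Q -> Q'}, forall g, f' (i g) = f g)].
Proof.
move=> /GP_data [P [d [h [p [TA [hi [him [Hp ps]]]]]]]].
have TA' := TA; case: TA' => Pp Pex Phom.
have Hd2 (q : P 1) : d (1 + 1) (d 1 q) = 0.
  by apply/(Pex 1); exists q.
exists (P 1), (kerT (d (1 + 1))), h.
have Hpi k (x y : P 1) : kmk (Hd2 (k *: x + y)) = k *: kmk (Hd2 x) + kmk (Hd2 y).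
  by apply: val_inj; rewrite /= linearP.
exists (mkL _ Hpi); split => //.
- apply: (GP_at (s := 1) (h := kinc (d (1 + 1)))) => //; first exact: val_inj.
  by move=> y; rewrite kin_iff; exact: Pex.
- move=> g'; have [q Hq] := (Pex 1 (val g')).1 (kin g').
  by exists q; apply: val_inj; rewrite mkLE kmkE.
split.
  move=> q; rewrite him; split.
    by move/(congr1 val); rewrite mkLE kmkE /= => /(Pex 0).
  by move/(Pex 0) => H; apply: val_inj; rewrite mkLE kmkE.
- move=> Q' f PQ'.
  have Hphi (x : P (-1)) : compL f p (d (-1) x) = 0.
    rewrite mkLE; have : h (p (d (-1) x)) = 0.
      by rewrite Hp; apply/(Pex (-1)); exists x.
    by rewrite -(linear0 h) => /hi ->; rewrite linear0.
  have [psi Hpsi] := Phom Q' PQ' (-1) (compL f p) Hphi.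
  exists psi => g; have [y <-] := ps g.
  by rewrite Hp; have := Hpsi y; rewrite mkLE.
Qed.

Lemma GP_ker (G : lmodType R) : gorenstein_projective G ->
  exists (P0 L : lmodType R) (p : {linear P0 -> G}) (i : {linear L -> P0}),
  [/\ projective P0, gorenstein_projective L, injective i,
      (forall g, exists x, p x = g) &
      (forall x, p x = 0 <-> exists l, i l = x)].
Proof.
move=> /GP_data [P [d [h [p [TA [hi [him [Hp ps]]]]]]]].
have TA' := TA; case: TA' => Pp Pex Phom.
exists (P 0), (kerT p), p, (kinc p); split => //.
- apply: (GP_at (s := -1) (h := kinc p)) => //; first exact: val_inj.
  move=> y; apply: iff_trans (kin_iff p y) _; rewrite -(Pex (-1)) -Hp.
  by split => [->|H]; [rewrite linear0 | apply: hi; rewrite H linear0].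
- exact: val_inj.
- by move=> x; apply: iff_sym (kin_iff p x).
Qed.

End GPsyz.

Section Ext.
Variable R : pzRingType.
Variables (A B C : lmodType R) (i : {linear A -> B}) (p : {linear B -> C}).
Hypotheses (iinj : injective i) (psurj : forall c, exists b, p b = c)
  (pker : forall b, p b = 0 <-> exists a, i a = b).

Lemma pi0 a : p (i a) = 0. Proof. by apply/pker; exists a. Qed.

Lemma inj0 (U V : lmodType R) (f : {linear U -> V}) x : injective f -> f x = 0 -> x = 0.
Proof. by move=> fi; rewrite -(linear0 f) => /fi. Qed.

Lemma GP_ext : gorenstein_projective A -> gorenstein_projective C -> gorenstein_projective B.
Proof.
move=> /GP_data [PA [dA [hA [pA [TAA [hAi [hAim [HpA psA]]]]]]]].
move=> /GP_data [PC [dC [hC [pC [TAC [hCi [hCim [HpC psC]]]]]]]].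
case: TAA => PAp PAex PAhom; case: TAC => PCp PCex PChom.
have ddA j (x : PA j) : dA (j + 1) (dA j x) = 0 by apply/PAex; exists x.
have ddC j (x : PC j) : dC (j + 1) (dC j x) = 0 by apply/PCex; exists x.
have [beta Hbeta] : exists beta : {linear PC 0 -> B}, forall y, p (beta y) = pC y.
  apply: proj_lift => // y; exact: psurj.
have phiex (z : PC (-1)) : exists a, i a = beta (dC (-1) z).
  apply/pker; rewrite Hbeta; apply: (inj0 (f := hC)) => //.
  by rewrite HpC; exact: (ddC (-1) z).
have [phi Hphi] : exists phi : {linear PC (-1) -> PA 1},
    forall z, exists a, i a = beta (dC (-1) z) /\ phi z = hA a.
  apply: (exists_linear (Rel := fun z v => exists a, i a = beta (dC (-1) z) /\ v = hA a)).
  - by move=> z; have [a Ha] := phiex z; exists (hA a), a.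
  - by move=> z v v' [a [Ha ->]] [a' [Ha' ->]]; congr (hA _); apply: iinj; rewrite Ha Ha'.
  - move=> k z z' v v' [a [Ha ->]] [a' [Ha' ->]]; exists (k *: a + a').
    by rewrite !linearP Ha Ha'.
have Hphi0 (x : PC (-2)) : phi (dC (-2) x) = 0.
  have [a [Ha ->]] := Hphi (dC (-2) x).
  have : i a = 0 by rewrite Ha (ddC (-2) x) linear0.
  by move/(inj0 iinj) ->; rewrite linear0.
have [psi Hpsi] : exists psi : {linear PC 0 -> PA 1},
    forall z : PC (-1), psi (dC (-1) z) = phi z.
  exact: PChom (PA 1) (PAp 1) (-2) phi Hphi0.
have Huniq y a y' a' : beta y + i a = beta y' + i a' -> psi y + hA a = psi y' + hA a'.
  move=> E.
  have Ew : beta (y - y') = i (a' - a).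
    by rewrite !linearB /=; apply/eqP; rewrite subr_eq addrAC eq_sym subr_eq E addrC.
  have : pC (y - y') = 0 by rewrite -Hbeta Ew pi0.
  move=> /(congr1 hC); rewrite HpC linear0 => /(PCex (-1)) [z Hz].
  have [a'' [Ha'' Hpz]] := Hphi z.
  have Ea : a'' = a' - a by apply: iinj; rewrite Ha'' Hz Ew.
  have E2 : psi y - psi y' = hA a' - hA a.
    by have := Hpsi z; rewrite Hz Hpz Ea !linearB.
  have -> : psi y = psi y' + (hA a' - hA a) by rewrite -E2 (addrC (psi y')) subrK.
  by rewrite -addrA subrK.
have decomp b : exists y a, b = beta y + i a.
  have [y Hy] := psC (p b).
  have : p (b - beta y) = 0 by rewrite linearB /= Hbeta Hy subrr.
  by case/pker => a Ha; exists y, a; rewrite Ha addrC subrK.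
have [alpha Halpha] : exists alpha : {linear B -> PA 1},
    forall b, exists y a, b = beta y + i a /\ alpha b = psi y + hA a.
  apply: (exists_linear (Rel := fun b v => exists y a, b = beta y + i a /\ v = psi y + hA a)).
  - by move=> b; have [y [a Hb]] := decomp b; exists (psi y + hA a), y, a.
  - by move=> b v v' [y [a [Hb ->]]] [y' [a' [Hb' ->]]]; apply: Huniq; rewrite -Hb -Hb'.
  - move=> k b b' v v' [y [a [Hb ->]]] [y' [a' [Hb' ->]]].
    exists (k *: y + y'), (k *: a + a'); split.
    + by rewrite Hb Hb' (linearP beta) (linearP i) scalerDr addrACA.
    + by rewrite (linearP psi) (linearP hA) scalerDr addrACA.
have Halpha2 y a : alpha (beta y + i a) = psi y + hA a.
  have [y' [a' [Hb ->]]] := Halpha (beta y + i a); symmetry; exact: Huniq.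
have Pre (z : PC (-1)) : dA 1 (psi (dC (-1) z)) = 0.
  rewrite Hpsi; have [a [_ ->]] := Hphi z.
  have [x Hx] := (hAim (hA a)).1 (ex_intro _ a erefl); rewrite -Hx; exact: ddA 0 x.
have Hl1 k (y y' : PC 0) : - dA 1 (psi (k *: y + y')) = k *: (- dA 1 (psi y)) + - dA 1 (psi y').
  by rewrite (linearP psi) (linearP (dA 1)) opprD scalerN.
have [th1 Hth1] : exists th1 : {linear PC 1 -> PA (1 + 1)},
    forall y : PC 0, th1 (dC 0 y) = - dA 1 (psi y).
  have H0 (x : PC (-1)) : mkL _ Hl1 (dC (-1) x) = 0 by rewrite mkLE Pre oppr0.
  exact: PChom (PA (1 + 1)) (PAp _) (-1) (mkL _ Hl1) H0.
pose T (j : int) := {linear PC j -> PA (j + 1)}.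
pose Good (j : int) (x : T j) (y : T (j + 1)) :=
  forall z : PC j, dA (j + 1) (x z) + y (dC j z) = 0.
pose S (j : int) := {xy : T j * T (j + 1) | Good j xy.1 xy.2}.
have up_ex (j : int) (s : S j) : exists w : T (j + 1 + 1), Good (j + 1) (proj1_sig s).2 w.
  case: s => [[x y] Hg] /=.
  have Hl k (z z' : PC (j + 1)) : - dA (j + 1 + 1) (y (k *: z + z')) =
       k *: (- dA (j + 1 + 1) (y z)) + - dA (j + 1 + 1) (y z').
    by rewrite (linearP y) (linearP (dA (j + 1 + 1))) opprD scalerN.
  have H0 (u : PC j) : mkL _ Hl (dC j u) = 0.
    rewrite mkLE (add_eq0_r (Hg u)) (linearN (dA (j + 1 + 1))) (ddA (j + 1)).
    by rewrite !oppr0.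
  have [w Hw] := PChom (PA (j + 1 + 1 + 1)) (PAp _) j (mkL _ Hl) H0.
  by exists w => z; rewrite Hw mkLE subrr.
have down_ex (j : int) (s : S (j + 1)) : exists x : T j, Good j x (proj1_sig s).1.
  case: s => [[y w] Hg] /=.
  have Hl k (z z' : PC j) : - y (dC j (k *: z + z')) = k *: (- y (dC j z)) + - y (dC j z').
    by rewrite (linearP (dC j)) (linearP y) opprD scalerN.
  have [x Hx] : exists x : {linear PC j -> PA (j + 1)}, forall z, dA (j + 1) (x z) = mkL _ Hl z.
    apply: proj_lift => // z; apply/(PAex (j + 1)).
    rewrite mkLE (linearN (dA (j + 1 + 1))) (add_eq0_l (Hg (dC j z))) (ddC j).
    by rewrite linear0 !oppr0.
  by exists x => z; rewrite Hx mkLE addNr.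
pose up (j : int) (s : S j) : S (j + 1) :=
  exist (fun xy : T (j + 1) * T (j + 1 + 1) => Good (j + 1) xy.1 xy.2)
    ((proj1_sig s).2, proj1_sig (constructive_indefinite_description _ (up_ex j s)))
    (proj2_sig (constructive_indefinite_description _ (up_ex j s))).
pose down (j : int) (s : S (j + 1)) : S j :=
  exist (fun xy : T j * T (j + 1) => Good j xy.1 xy.2)
    (proj1_sig (constructive_indefinite_description _ (down_ex j s)), (proj1_sig s).1)
    (proj2_sig (constructive_indefinite_description _ (down_ex j s))).
have Good0 : Good 0 psi th1 by move=> z; rewrite Hth1 subrr.
pose s0 : S 0 := exist (fun xy : T 0 * T (0 + 1) => Good 0 xy.1 xy.2) (psi, th1) Good0.
have [sq [Hsq0 Hsq]] := @int_rec_ex S (fun j (x : S j) (y : S (j + 1)) => (proj1_sig x).2 = (proj1_sig y).1)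
   s0 up down (fun _ _ => erefl) (fun _ _ => erefl).
pose th (j : int) : T j := (proj1_sig (sq j)).1.
have Hth j : Good j (th j) (th (j + 1)).
  by rewrite /th -(Hsq j); exact: (proj2_sig (sq j)).
have th0 : th 0 = psi by rewrite /th Hsq0.
have Hlin j k (z z' : (PA j * PC j)%type) :
  (dA j (k *: z + z').1 + th j (k *: z + z').2, dC j (k *: z + z').2) =
  k *: (dA j z.1 + th j z.2, dC j z.2) + (dA j z'.1 + th j z'.2, dC j z'.2).
  apply: injective_projections => /=.
  - by rewrite (linearP (dA j)) (linearP (th j)) scalerDr addrACA.
  - by rewrite (linearP (dC j)).
pose dB (j : int) : {linear (PA j * PC j)%type -> (PA (j + 1)%R * PC (j + 1)%R)%type} :=
  mkL _ (Hlin j).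
have dBE j z : dB j z = (dA j z.1 + th j z.2, dC j z.2) by [].
have TAB : totally_acyclic dB.
  split.
  - move=> j; exact: proj_prod.
  - move=> j [x y]; split.
    + move=> H; have H1 := congr1 fst H; have H2 := congr1 snd H.
      rewrite dBE /= in H1 H2.
      have [y' Hy'] := (PCex j y).1 H2.
      have : dA (j + 1) (x - th j y') = 0.
        rewrite linearB /= (add_eq0_l H1) (add_eq0_l (Hth j y')) Hy'.
        by rewrite opprK addNr.
      case/(PAex j) => x'' Hx''.
      exists (x'', y'); rewrite dBE /= Hx'' Hy'.
      by rewrite subrK.
    + case=> [[x'' y']] <-; rewrite !dBE /=.
      apply: injective_projections => /=.
      * by rewrite linearD /= ddA add0r (Hth j y').
      * exact: ddC.
  - move=> Q PQ j ph Hph.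
    have HlA k (a a' : PA (j + 1)) : ph (k *: a + a', 0) = k *: ph (a, 0) + ph (a', 0).
      rewrite -linearP; congr (ph _); apply: injective_projections => /=; by rewrite ?scaler0 ?addr0.
    have HlC k (a a' : PC (j + 1)) : ph (0, k *: a + a') = k *: ph (0, a) + ph (0, a').
      rewrite -linearP; congr (ph _); apply: injective_projections => /=; by rewrite ?scaler0 ?addr0.
    pose phA := mkL _ HlA; pose phC := mkL _ HlC.
    have phS a c : ph (a, c) = phA a + phC c.
      rewrite !mkLE -linearD; congr (ph _).
      by apply: injective_projections => /=; rewrite ?addr0 ?add0r.
    have HA0 (x : PA j) : phA (dA j x) = 0.
      rewrite mkLE -(Hph (x, 0)) dBE /= !linear0 addr0; by [].
    have [qA HqA] := PAhom Q PQ j phA HA0.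
    have HlC' k (c c' : PC (j + 1)) : phC (k *: c + c') - qA (th (j + 1) (k *: c + c')) =
        k *: (phC c - qA (th (j + 1) c)) + (phC c' - qA (th (j + 1) c')).
      by rewrite (linearP phC) (linearP (th (j + 1))) (linearP qA) opprD addrACA scalerBr.
    have HC0 (z : PC j) : mkL _ HlC' (dC j z) = 0.
      rewrite mkLE (add_eq0_r (Hth j z)) (linearN qA) HqA opprK.
      by rewrite addrC -phS -(Hph (0, z)) dBE /= linear0 add0r.
    have [qC HqC] := PChom Q PQ j (mkL _ HlC') HC0.
    have Hl k (z z' : (PA (j + 1 + 1)%R * PC (j + 1 + 1)%R)%type) :
        qA (k *: z + z').1 + qC (k *: z + z').2 =
        k *: (qA z.1 + qC z.2) + (qA z'.1 + qC z'.2).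
      by rewrite /= (linearP qA) (linearP qC) scalerDr addrACA.
    exists (mkL _ Hl) => -[x y]; rewrite mkLE dBE /= linearD HqA HqC mkLE phS.
    by rewrite -addrA (addrCA (qA _)) subrr addr0.
have HlB k (b b' : B) : (alpha (k *: b + b'), hC (p (k *: b + b'))) =
    k *: (alpha b, hC (p b)) + (alpha b', hC (p b')).
  by apply: injective_projections => /=; rewrite ?(linearP alpha) ?(linearP p) ?(linearP hC).
pose hB : {linear B -> (PA 1 * PC 1)%type} := mkL _ HlB.
exists (fun j => (PA j * PC j)%type), dB; split => //; exists hB; split.
  have Hk b : hB b = 0 -> b = 0.
    move=> H; have H1 := congr1 fst H; have H2 := congr1 snd H; rewrite /= in H1 H2.
    have : p b = 0 by apply: (inj0 hCi).
    case/pker => a Ha; move: H1; rewrite -Ha.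
    have := Halpha2 0 a; rewrite !linear0 !add0r => -> /(inj0 hAi) ->.
    by rewrite linear0.
  move=> b b' E; apply/eqP; rewrite -subr_eq0; apply/eqP; apply: Hk.
  by rewrite linearB E subrr.
move=> v; split.
  case=> b <-; have [y [a Hb]] := decomp b.
  have [x Hx] := (hAim (hA a)).1 (ex_intro _ a erefl).
  exists (x, y); rewrite dBE th0 /= Hb.
  apply: injective_projections => /=.
  - by rewrite Halpha2 Hx (addrC (hA a)).
  - by rewrite linearD /= pi0 addr0 Hbeta HpC.
case=> -[x y] <-; have [a Ha] := (hAim (dA 0 x)).2 (ex_intro _ x erefl).
exists (beta y + i a); rewrite dBE th0 /=.
apply: injective_projections => /=.
- by rewrite Halpha2 Ha (addrC (psi y)).
- by rewrite linearD /= pi0 addr0 Hbeta HpC.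
Qed.
End Ext.

Section Res.
Variable R : pzRingType.

Definition Res (M : lmodType R) (n t : nat) : Prop :=
  exists (X : nat -> lmodType R) (d : forall k : nat, {linear X k.+1 -> X k})
         (e : {linear X 0%N -> M}),
    exact_resolution n d e /\ gorenstein_projective (X t) /\
    forall i : nat, (i <= n)%N -> i <> t -> projective (X i).

Definition Zm : lmodType R := 'M[R]_(0, 0).
Lemma Z0 (x : Zm) : x = 0. Proof. by rewrite [x]flatmx0. Qed.

Lemma lin_inv (G G' : lmodType R) (f : {linear G -> G'}) :
  injective f -> (forall y, exists x, f x = y) ->
  exists g : {linear G' -> G}, injective g /\ (forall x, exists y, g y = x) /\
     forall y, f (g y) = y.
Proof.
move=> fi fs.
have [g Hg] : exists g : {linear G' -> G}, forall y, f (g y) = y.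
  apply: (exists_linear (Rel := fun y x => f x = y)) => //.
  - by move=> y x x' H1 H2; apply: fi; rewrite H1 H2.
  - by move=> k a a' b b' <- <-; rewrite linearP.
exists g; split; last split => //.
- by move=> y y' E; rewrite -(Hg y) -(Hg y') E.
- by move=> x; exists (f x); apply: fi; rewrite Hg.
Qed.

Lemma GP_iso2 (G G' : lmodType R) (f : {linear G -> G'}) :
  injective f -> (forall y, exists x, f x = y) ->
  gorenstein_projective G -> gorenstein_projective G'.
Proof.
move=> fi fs; have [g [gi [gs _]]] := lin_inv fi fs.
exact: GP_iso gi gs.
Qed.

Lemma res0 (G : lmodType R) : gorenstein_projective G -> Res G 0 0.
Proof.
move=> HG.
pose X (k : nat) : lmodType R := match k with 0 => G | _ => Zm end.
exists X, (fun k => zeroL (X k.+1) (X k)), (idL G); split; last first.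
  split => //; move=> [|j] // _ H; exfalso; exact: H.
split.
- by move=> [|k] // _ x; exact: Z0.
- by move=> m; exists m.
- by move=> b; rewrite mkLE; split => [->|[a <-]]; [exists 0; rewrite mkLE | rewrite mkLE].
- move=> k b; rewrite mkLE; split => [_|_ //].
  by exists 0; rewrite mkLE; symmetry; exact: Z0.
Qed.

Lemma splice (K X0 M : lmodType R) (i : {linear K -> X0}) (q : {linear X0 -> M}) n
  (X : nat -> lmodType R) (d : forall k : nat, {linear X k.+1 -> X k}) (e : {linear X 0%N -> K}) :
  injective i -> (forall m, exists x, q x = m) -> (forall x, q x = 0 <-> exists k, i k = x) ->
  exact_resolution n d e ->
  exists (X' : nat -> lmodType R) (d' : forall k : nat, {linear X' k.+1 -> X' k})
         (e' : {linear X' 0%N -> M}),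
    exact_resolution n.+1 d' e' /\ X' 0%N = X0 /\ forall k, X' k.+1 = X k.
Proof.
move=> ii qs qk [Hz Hs He0 He].
pose X' (k : nat) : lmodType R := match k with 0 => X0 | k'.+1 => X k' end.
pose d' (k : nat) : {linear X' k.+1 -> X' k} :=
  match k return {linear X' k.+1 -> X' k} with 0 => compL i e | k'.+1 => d k' end.
exists X', d', q; split => //; split => //.
- by move=> [|k] // Hk x; exact: Hz.
- move=> b; rewrite qk; split; case=> x <-.
    by have [a <-] := Hs x; exists a.
  by exists (e x).
- move=> [|k] b /=.
  + split => [H|H].
      by apply/He0; apply: ii; rewrite H linear0.
    by move/He0: H => ->; rewrite linear0.
  + exact: He.
Qed.

Lemma unsplice n (M : lmodType R) (X : nat -> lmodType R) (d : forall k : nat, {linear X k.+1 -> X k})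
  (e : {linear X 0%N -> M}) : exact_resolution n.+1 d e ->
  exists (K : lmodType R) (i : {linear K -> X 0%N}) (e1 : {linear X 1%N -> K}),
    [/\ injective i, (forall m, exists x, e x = m),
        (forall x, e x = 0 <-> exists k, i k = x) &
        exact_resolution n (fun k => d k.+1) e1].
Proof.
move=> [Hz Hs He0 He].
have Hd (x : X 1%N) : e (d 0%N x) = 0 by apply/He0; exists x.
have Hl k (x y : X 1%N) : kmk (Hd (k *: x + y)) = k *: kmk (Hd x) + kmk (Hd y).
  by apply: val_inj; rewrite /= linearP.
exists (kerT e), (kinc e), (mkL _ Hl); split => //.
- exact: val_inj.
- by move=> x; apply: iff_sym (kin_iff e x).
split.
- by move=> k Hk x; apply: Hz.
- move=> k; have [a Ha] := (He0 (val k)).1 (kin k).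
  by exists a; apply: val_inj; rewrite mkLE kmkE.
- move=> b; rewrite -(He 0%N); split.
    by move/(congr1 val); rewrite mkLE kmkE.
  by move=> H; apply: val_inj; rewrite mkLE kmkE /= H.
- by move=> k; exact: He.
Qed.

Lemma Res_splice (K X0 M : lmodType R) (i : {linear K -> X0}) (q : {linear X0 -> M}) n t :
  injective i -> (forall m, exists x, q x = m) -> (forall x, q x = 0 <-> exists k, i k = x) ->
  projective X0 -> Res K n t -> Res M n.+1 t.+1.
Proof.
move=> ii qs qk PX0 [X [d [e [Hr [HG HP]]]]].
have [X' [d' [e' [Hr' [E0 ES]]]]] := splice ii qs qk Hr.
exists X', d', e'; split => //; split; first by rewrite ES.
move=> [|j] Hj Hne; first by rewrite E0.
by rewrite ES; apply: HP => // Ej; apply: Hne; rewrite Ej.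
Qed.

Lemma Res_unsplice (M : lmodType R) n t : Res M n.+1 t.+1 ->
  exists (K X0 : lmodType R) (i : {linear K -> X0}) (q : {linear X0 -> M}),
    [/\ injective i, (forall m, exists x, q x = m),
        (forall x, q x = 0 <-> exists k, i k = x), projective X0 & Res K n t].
Proof.
move=> [X [d [e [Hr [HG HP]]]]].
have [K [i [e1 [ii es ek Hr1]]]] := unsplice Hr.
exists K, (X 0%N), i, e; split => //; first by apply: HP.
exists (fun k => X k.+1), (fun k => d k.+1), e1; split => //; split => //.
by move=> j Hj Hne; apply: HP => // [[Ej]]; apply: Hne.
Qed.

Lemma Gpd_unsplice (M : lmodType R) n : Gpd_le M n.+1 ->
  exists (K X0 : lmodType R) (i : {linear K -> X0}) (q : {linear X0 -> M}),
    [/\ injective i, (forall m, exists x, q x = m),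
        (forall x, q x = 0 <-> exists k, i k = x), gorenstein_projective X0 & Gpd_le K n].
Proof.
move=> [X [d [e [Hr HG]]]].
have [K [i [e1 [ii es ek Hr1]]]] := unsplice Hr.
exists K, (X 0%N), i, e; split => //; first by apply: HG.
by exists (fun k => X k.+1), (fun k => d k.+1), e1; split => // j Hj; apply: HG.
Qed.

End Res.

Section Main.
Variable R : pzRingType.

Lemma ker_factor (U V K : lmodType R) (iK : {linear K -> V}) (g : U -> V) :
  injective iK -> (forall k u u', g (k *: u + u') = k *: g u + g u') ->
  (forall u, exists k, iK k = g u) ->
  exists b : {linear U -> K}, forall u, iK (b u) = g u.
Proof.
move=> ii Hg Hex.
apply: (exists_linear (Rel := fun u k => iK k = g u)) => //.
- by move=> u k k' H1 H2; apply: ii; rewrite H1 H2.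
- by move=> c u u' k k' H1 H2; rewrite linearP H1 H2 Hg.
Qed.

Lemma lin_inj (U V : lmodType R) (f : {linear U -> V}) :
  (forall x, f x = 0 -> x = 0) -> injective f.
Proof.
move=> H x y E; apply/eqP; rewrite -subr_eq0; apply/eqP; apply: H.
by rewrite linearB E subrr.
Qed.

Lemma GPRes (L : lmodType R) m : gorenstein_projective L -> Res L m m.
Proof.
elim: m L => [|m IH] L HL; first exact: res0.
have [P0 [L' [p [i [PP0 GL' ii ps pk]]]]] := GP_ker HL.
exact: (Res_splice ii ps pk PP0 (IH _ GL')).
Qed.

Lemma Res0_GP (M : lmodType R) : Res M 0 0 -> gorenstein_projective M.
Proof.
case=> X [d [e [[Hz Hs He0 He] [HG _]]]].
apply: (GP_iso2 (f := e)) => //.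
apply: lin_inj => x /He0 [a <-].
by rewrite (Hz 1%N erefl a) linear0.
Qed.

Lemma horseshoe m : forall (L K' K : lmodType R) (i : {linear L -> K'}) (p : {linear K' -> K}),
  injective i -> (forall k, exists x, p x = k) -> (forall x, p x = 0 <-> exists l, i l = x) ->
  Res L m m -> Res K m m -> Res K' m m.
Proof.
elim: m => [|m IH] L K' K i p ii ps pk RL RK.
  by apply: res0; apply: (GP_ext ii ps pk); apply: Res0_GP.
have [L1 [X0 [iL [qL [iLi qLs qLk PX0 RL1]]]]] := Res_unsplice RL.
have [K1 [Y0 [iK [qK [iKi qKs qKk PY0 RK1]]]]] := Res_unsplice RK.
have [sg Hsg] : exists sg : {linear Y0 -> K'}, forall y, p (sg y) = qK y.
  by apply: proj_lift => // y; exact: ps.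
have HE k (z z' : (X0 * Y0)%type) : i (qL (k *: z + z').1) + sg (k *: z + z').2 =
    k *: (i (qL z.1) + sg z.2) + (i (qL z'.1) + sg z'.2).
  by rewrite /= (linearP qL) (linearP i) (linearP sg) scalerDr addrACA.
pose E0 := mkL _ HE.
have qLi l : qL (iL l) = 0 by apply/qLk; exists l.
have qKi l : qK (iK l) = 0 by apply/qKk; exists l.
have Ha (l : L1) : E0 (iL l, 0) = 0 by rewrite mkLE /= qLi !linear0 addr0.
have Hal k (l l' : L1) : kmk (Ha (k *: l + l')) = k *: kmk (Ha l) + kmk (Ha l').
  apply: val_inj; rewrite /= linearP; apply: injective_projections => /=; by rewrite ?scaler0 ?addr0.
pose a := mkL _ Hal.
have [b Hb] : exists b : {linear kerT E0 -> K1}, forall z, iK (b z) = (val z).2.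
  apply: (ker_factor (g := fun z : kerT E0 => (val z).2)) => // z; apply/qKk.
  have := kin z; rewrite mkLE => /(congr1 p); rewrite linearD /= Hsg linear0.
  by rewrite (_ : p (i _) = 0) ?add0r //; apply/pk; eexists.
apply: (Res_splice (i := kinc E0) (q := E0)) => //.
- exact: val_inj.
- move=> k'; have [y Hy] := qKs (p k').
  have : p (k' - sg y) = 0 by rewrite linearB /= Hsg Hy subrr.
  case/pk => l Hl; have [x Hx] := qLs l.
  by exists (x, y); rewrite mkLE /= Hx Hl subrK.
- by move=> x; apply: iff_sym (kin_iff E0 x).
- exact: proj_prod.
apply: (IH L1 _ K1 a b) => //.
- apply: lin_inj => l /(congr1 val); rewrite mkLE /= => /(congr1 fst) /= /(inj0 iLi) //.
- move=> k; have : p (sg (iK k)) = 0 by rewrite Hsg qKi.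
  case/pk => l Hl; have [x Hx] := qLs l.
  have Hz : E0 (- x, iK k) = 0 by rewrite mkLE /= (linearN qL) Hx (linearN i) Hl addNr.
  by exists (kmk Hz); apply: iKi; rewrite Hb.
- move=> z; split.
  + move=> Hz; have H2 : (val z).2 = 0 by rewrite -Hb Hz linear0.
    have := kin z; rewrite mkLE H2 linear0 addr0 => /(inj0 ii) /qLk [l Hl].
    exists l; apply: val_inj; rewrite mkLE /=.
    by apply: injective_projections => //=; rewrite H2.
  + case=> l <-; apply: (inj0 iKi); rewrite Hb mkLE /=; by [].
Qed.

Lemma GRes_Res n : forall (M : lmodType R), Gpd_le M n -> Res M n n.
Proof.
elim: n => [|n IH] M.
  case=> X [d [e [Hr HG]]]; exists X, d, e; split => //; split; first exact: HG.
  by move=> [|j] // _ H; exfalso; exact: H.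
case/Gpd_unsplice => K [X0 [i [q [ii qs qk GX0 GK]]]].
have RK := IH _ GK.
have [P0 [L [p [j [PP0 GL ji ps pk]]]]] := GP_ker GX0.
pose F := compL q p.
have Ha (l : L) : F (j l) = 0.
  by rewrite mkLE (_ : p (j l) = 0) ?linear0 //; apply/pk; exists l.
have Hal k (l l' : L) : kmk (Ha (k *: l + l')) = k *: kmk (Ha l) + kmk (Ha l').
  by apply: val_inj; rewrite /= linearP.
pose a := mkL _ Hal.
have [b Hb] : exists b : {linear kerT F -> K}, forall z, i (b z) = p (val z).
  apply: (ker_factor (g := fun z : kerT F => p (val z))) => //.
    by move=> k u u'; rewrite /= linearP.
  move=> z; apply/qk; have := kin z; by rewrite mkLE.
have RK' : Res (kerT F) n n.
  apply: (horseshoe (i := a) (p := b)) (GPRes n GL) RK.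
  - apply: lin_inj => l /(congr1 val); rewrite mkLE /=; exact: inj0.
  - move=> k; have [x Hx] := ps (i k).
    have Hz : F x = 0 by rewrite mkLE Hx; apply/qk; exists k.
    by exists (kmk Hz); apply: ii; rewrite Hb kmkE.
  - move=> z; split.
    + move=> Hz; have : p (val z) = 0 by rewrite -Hb Hz linear0.
      by case/pk => l Hl; exists l; apply: val_inj; rewrite mkLE.
    + by case=> l <-; apply: (inj0 ii); rewrite Hb mkLE /= (_ : p (j l) = 0) //; apply/pk; exists l.
apply: (Res_splice (i := kinc F) (q := F)) RK' => //.
- exact: val_inj.
- by move=> m; have [x <-] := qs m; have [y <-] := ps x; exists y; rewrite mkLE.
- by move=> x; apply: iff_sym (kin_iff F x).
Qed.

Lemma down_base (M : lmodType R) n : Res M n.+1 1 -> Res M n.+1 0.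
Proof.
case=> X [d [e [[Hz Hs He0 He] [GX1 PX]]]].
have PX0 : projective (X 0%N) by apply: PX.
have [Q [G' [io [pi [PQ GG' ioi pis [pik Hext]]]]]] := GP_cok GX1.
have [sg Hsg] := Hext _ (d 0%N) PX0.
have ed x : e (d 0%N x) = 0 by apply/He0; exists x.
have [ph Hph] : exists ph : {linear G' -> M},
    forall g, exists q, pi q = g /\ ph g = - e (sg q).
  apply: (exists_linear (Rel := fun g m => exists q, pi q = g /\ m = - e (sg q))).
  - by move=> g; have [q Hq] := pis g; exists (- e (sg q)), q.
  - move=> g m m' [q [Hq ->]] [q' [Hq' ->]].
    have : pi (q - q') = 0 by rewrite linearB /= Hq Hq' subrr.
    case/pik => x1 Hx1.
    have : e (sg (q - q')) = 0 by rewrite -Hx1 Hsg ed.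
    by rewrite (linearB sg) (linearB e) => /eqP; rewrite subr_eq0 => /eqP ->.
  - move=> k g g' m m' [q [Hq ->]] [q' [Hq' ->]]; exists (k *: q + q'); split.
      by rewrite linearP Hq Hq'.
    by rewrite (linearP sg) (linearP e) opprD scalerN.
have phE q : ph (pi q) = - e (sg q).
  have [q' [Hq' ->]] := Hph (pi q).
  have : pi (q' - q) = 0 by rewrite linearB /= Hq' subrr.
  case/pik => x1 Hx1.
  have : e (sg (q' - q)) = 0 by rewrite -Hx1 Hsg ed.
  by rewrite (linearB sg) (linearB e) => /eqP; rewrite subr_eq0 => /eqP ->.
pose X2 (k : nat) : lmodType R :=
  match k with 0 => (X 0%N * G')%type | 1 => Q | k'.+2 => X k'.+2 end.
have HD0 k (q q' : Q) : (sg (k *: q + q'), pi (k *: q + q')) =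
    k *: (sg q, pi q) + (sg q', pi q').
  by apply: injective_projections => /=; rewrite linearP.
pose D0 : {linear Q -> (X 0%N * G')%type} := mkL _ HD0.
pose d2 (k : nat) : {linear X2 k.+1 -> X2 k} :=
  match k return {linear X2 k.+1 -> X2 k} with
  | 0 => D0 | 1 => compL io (d 1%N) | k'.+2 => d k'.+2 end.
have HE k (z z' : (X 0%N * G')%type) : e (k *: z + z').1 + ph (k *: z + z').2 =
    k *: (e z.1 + ph z.2) + (e z'.1 + ph z'.2).
  by rewrite /= (linearP e) (linearP ph) scalerDr addrACA.
pose E2 : {linear X2 0%N -> M} := mkL _ HE.
exists X2, d2, E2; split; last split.
- split.
  + by move=> [|[|k]] // Hk x; apply: Hz.
  + by move=> m; have [x <-] := Hs m; exists (x, 0); rewrite ?mkLE /= linear0 addr0.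
  + move=> [x g]; rewrite ?mkLE /=; split.
    * move=> H0; have [q0 Hq0] := pis g.
      have : e (x - sg q0) = 0.
        by rewrite (linearB e); move: H0; rewrite -Hq0 phE.
      case/He0 => x1 Hx1.
      exists (q0 + io x1); rewrite /=.
      apply: injective_projections => /=.
      - by rewrite linearD /= Hsg Hx1 addrC subrK.
      - by rewrite linearD /= Hq0 (_ : pi (io x1) = 0) ?addr0 //; apply/pik; exists x1.
    * by case=> q; rewrite ?mkLE => [[<- <-]]; rewrite phE subrr.
  + move=> [|[|k]] b /=.
    * rewrite ?mkLE; split.
      - move=> H0; have H1 := congr1 fst H0; have H2 := congr1 snd H0; rewrite /= in H1 H2.
        case/pik: H2 => x1 Hx1; move: H1; rewrite -Hx1 Hsg => /(He 0%N) [a Ha].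
        by exists a; rewrite ?mkLE Ha.
      - case=> a <-; rewrite ?mkLE; apply: injective_projections => /=.
          by rewrite Hsg; apply/(He 0%N); exists a.
        by apply/pik; exists (d 1%N a).
    * rewrite ?mkLE; split => [H0|[a <-]].
        by apply/(He 1%N); apply: (inj0 ioi).
      by rewrite (_ : d 1%N (d 2%N a) = 0) ?linear0 //; apply/(He 1%N); exists a.
    * exact: He.
- have Hi0 k (x y : X 0%N) : (k *: x + y, (0 : G')) = k *: (x, 0) + (y, 0).
    by apply: injective_projections => /=; rewrite ?scaler0 ?addr0.
  apply: (GP_ext (i := mkL _ Hi0)
                 (p := mkL (fun z : (X 0%N * G')%type => z.2) (fun _ _ _ => erefl))).
  + by move=> x y [].
  + by move=> g; exists (0, g).
  + move=> [x g]; rewrite ?mkLE /=; split => [->|[a]]; first by exists x.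
    by rewrite ?mkLE => [[_ <-]].
  + exact: proj_GP.
  + exact: GG'.
- move=> [|[|k]] Hk Hne; [by case: Hne | exact: PQ | ].
  by apply: PX.
Qed.

Lemma down t : forall (M : lmodType R) n, (t < n)%N -> Res M n t.+1 -> Res M n t.
Proof.
elim: t => [|t IH] M [|n] // Hlt; first exact: down_base.
case/Res_unsplice => K [X0 [i [q [ii qs qk PX0 RK]]]].
exact: (Res_splice ii qs qk PX0 (IH _ _ Hlt RK)).
Qed.

Lemma down_many (M : lmodType R) n t k : (t + k <= n)%N -> Res M n (t + k) -> Res M n t.
Proof.
elim: k => [|k IH] Hk RM; first by rewrite addn0 in RM.
apply: IH; first by apply: leq_trans Hk; rewrite addnS.
apply: down; first by rewrite -addnS.
by rewrite -addnS.
Qed.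

End Main.

Theorem theorem2p6 (R : pzRingType) (M : lmodType R) (n : nat) :
  Gpd_le M n <->
  (forall t : nat, (t <= n)%N ->
     exists (X : nat -> lmodType R) (d : forall k : nat, {linear X k.+1 -> X k})
            (e : {linear X 0%N -> M}),
       exact_resolution n d e /\
       gorenstein_projective (X t) /\
       forall i : nat, (i <= n)%N -> i <> t -> projective (X i)).
Proof.
split.
- move=> HG t Ht.
  have Hk : (t + (n - t) <= n)%N by rewrite subnKC.
  apply: (down_many Hk); rewrite subnKC //; exact: GRes_Res.
- move=> H; have [X [d [e [Hr [HG HP]]]]] := H 0%N (leq0n n).
  exists X, d, e; split => // [[|i]] Hi //.
  by apply: proj_GP; apply: HP.
Qed.
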